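(* Let $\Gamma$ be a metrized graph with $v \geq 3$ vertices. For admissible contractions $\overline{\Gamma}_{i_1,\dots,i_{v-2}}$ (which have exactly two vertices, denoted $p'$ and $q'$), $$(v-2)!\; y(\Gamma) = \sum_{e_{i_1} \in E(\Gamma)}\frac{R_{i_1}}{L_{i_1}+R_{i_1}} \sum_{e_{i_2} \in E(\overline{\Gamma}_{i_1})}\frac{R_{i_2}}{L_{i_2}+R_{i_2}}\cdots\sum_{e_{i_{v-2}} \in E(\overline{\Gamma}_{i_1, \dots, i_{v-3}})}\frac{R_{i_{v-2}}}{L_{i_{v-2}}+R_{i_{v-2}}}\; r_{\overline{\Gamma}_{i_1,\dots, i_{v-2}}}(p',q').$$
   Context: A metrized graph $\Gamma$ is a finite connected graph (multiple edges and self-loops allowed) each of whose edges is identified with a closed segment of positive length, with a finite nonempty vertex set $V(\Gamma)$ containing every point of valence $\neq2$; $v=\#V(\Gamma)$, $L_i$ the length of $e_i$; $r_\beta$ denotes effective resistance in $\beta$ (edges as resistors of resistance equal to length). For an edge $e_i$ with end points $p_i,q_i$: if $\Gamma-e_i$ (interior deleted) is connected, $R_i$ is the effective resistance between $p_i,q_i$ in $\Gamma-e_i$, $R_{a_i,p}=\hat j_{p_i}(p,q_i)$, $R_{b_i,p}=\hat j_{q_i}(p,p_i)$ with $\hat j_z(x,y)$ the voltage function of $\Gamma-e_i$ (potential at $x$ when unit current enters at $y$ and exits at $z$, potential $0$ at $z$); if $e_i$ is a bridge, $R_{a_i,p}=0,R_{b_i,p}=R_i$ for $p$ in the component of $\Gamma-e_i$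 containing $p_i$ and $R_{a_i,p}=R_i,R_{b_i,p}=0$ otherwise, with every expression in $R_i$ interpreted as its limit as $R_i\to\infty$; for a self-loop $R_i=0$. For a fixed vertex $p$ (independent of choice), $y(\Gamma)=\frac14\sum_{e_i}\frac{L_iR_i^2}{(L_i+R_i)^2}+\frac34\sum_{e_i}\frac{L_i(R_{a_i,p}-R_{b_i,p})^2}{(L_i+R_i)^2}$. $\overline\Gamma_{i_1,\dots,i_k}$ is obtained by successively contracting to a point $e_{i_1}\in E(\Gamma)$, then $e_{i_2}\in E(\overline\Gamma_{i_1})$, etc. (vertex sets being images of $V(\Gamma)$); $L_{i_j},R_{i_j}$ are computed in $\overline\Gamma_{i_1,\dots,i_{j-1}}$. A contraction is admissible if each contracted edge has distinct end points (self-loop terms vanish anyway since $R=0$). *)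

(* Defs.v *)
From HB Require Import structures.
From mathcomp Require Import all_boot all_order all_algebra.
From mathcomp Require Import reals.
From Stdlib Require Import ClassicalEpsilon.
Set Implicit Arguments. Unset Strict Implicit. Unset Printing Implicit Defensive.
Import Order.TTheory GRing.Theory Num.Theory.
Local Open Scope ring_scope.

(* A model of a metrized graph: a finite vertex set [verts] inside a finite
   label type V, and a finite list of edges ((p, q), L) with end points p, q
   and length L (multiple edges and self-loops allowed). *)
Record mgraph (V : finType) (R : realType) := MGraph {
  verts : {set V};
  edges : seq (V * V * R)
}.

Section MG.
Variables (V : finType) (R : realType).
Implicit Types (G : mgraph V R) (e : V * V * R).

Definition ep1 e : V := e.1.1.
Definition ep2 e : V := e.1.2.
Definition len e : R := e.2.

Definition wf_graph G : Prop :=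
  forall e, e \in edges G -> [/\ ep1 e \in verts G, ep2 e \in verts G & 0 < len e].

Definition adj G : rel V := fun x y =>
  has (fun e => ((ep1 e == x) && (ep2 e == y)) || ((ep1 e == y) && (ep2 e == x)))
      (edges G).

Definition connectedb G : bool :=
  [forall x in verts G, forall y in verts G, connect (adj G) x y].

Definition delete_edge G e : mgraph V R := MGraph (verts G) (rem e (edges G)).

Definition is_bridge G e : bool := ~~ connectedb (delete_edge G e).

Definition contract G e : mgraph V R :=
  let rn x := if x == ep2 e then ep1 e else x in
  MGraph (verts G :\ ep2 e)
         (map (fun f => (rn (ep1 f), rn (ep2 f), len f)) (rem e (edges G))).

(* net current flowing out of w through the edges, for a potential f
   (each edge is a resistor of resistance equal to its length) *)
Definition outflow G (f : V -> R) (w : V) : R :=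
  \sum_(e <- edges G)
     ((if ep1 e == w then (f w - f (ep2 e)) / len e else 0)
    + (if ep2 e == w then (f w - f (ep1 e)) / len e else 0)).

(* f is the potential when unit current enters at y and exits at z,
   with potential 0 at z (Kirchhoff's laws) *)
Definition is_voltage G (z y : V) (f : V -> R) : Prop :=
  f z = 0 /\
  forall w, w \in verts G ->
    outflow G f w = (if w == y then 1 else 0) - (if w == z then 1 else 0).

(* voltage function j_z(x, y) (meaningful for connected G) *)
Definition jvolt G (z x y : V) : R :=
  epsilon (inhabits (fun _ : V => 0 : R)) (is_voltage G z y) x.

Definition eff_res G (x y : V) : R := jvolt G y x x.

Definition Ri G e : R := eff_res (delete_edge G e) (ep1 e) (ep2 e).

(* R_i / (L_i + R_i), with its limit 1 for a bridge (R_i -> oo) *)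
Definition ratio G e : R :=
  if is_bridge G e then 1 else Ri G e / (len e + Ri G e).

(* y(Gamma) computed with base vertex p; bridge terms are the limits
   R_i -> oo of the summands (both equal to L_i) *)
Definition yterm1 G e : R :=
  if is_bridge G e then len e
  else len e * (Ri G e) ^+ 2 / (len e + Ri G e) ^+ 2.

Definition yterm2 G (p : V) e : R :=
  if is_bridge G e then len e
  else
    let Ra := jvolt (delete_edge G e) (ep1 e) p (ep2 e) in
    let Rb := jvolt (delete_edge G e) (ep2 e) p (ep1 e) in
    len e * (Ra - Rb) ^+ 2 / (len e + Ri G e) ^+ 2.

Definition y_inv G (p : V) : R :=
  (1 / 4) * (\sum_(e <- edges G) yterm1 G e)
  + (3 / 4) * (\sum_(e <- edges G) yterm2 G p e).

Definition two_vertex_res G : R :=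
  match enum (verts G) with
  | [:: a; b] => eff_res G a b
  | _ => 0
  end.

(* nested sum over admissible contraction sequences of length k
   (self-loops are skipped: their terms vanish since R = 0) *)
Fixpoint nested_sum (k : nat) G : R :=
  match k with
  | 0 => two_vertex_res G
  | k'.+1 => \sum_(e <- edges G | ep1 e != ep2 e)
               ratio G e * nested_sum k' (contract G e)
  end.

End MG.

(* Main.v *)
Require Import Defs.
From HB Require Import structures.
From mathcomp Require Import all_boot all_order all_algebra.
From mathcomp Require Import reals.
From mathcomp Require Import ring lra.
From Stdlib Require Import ClassicalEpsilon.
Set Implicit Arguments. Unset Strict Implicit. Unset Printing Implicit Defensive.
Import Order.TTheory GRing.Theory Num.Theory.
Local Open Scope ring_scope.

Module P1.


Section Basic.
Variables (V : finType) (R : realType).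
Implicit Types (G : mgraph V R) (e : V * V * R) (f g h : V -> R).

Definition term e f (w : V) : R :=
  (if ep1 e == w then (f w - f (ep2 e)) / len e else 0)
+ (if ep2 e == w then (f w - f (ep1 e)) / len e else 0).

Lemma outflowE G f w : outflow G f w = \sum_(e <- edges G) term e f w.
Proof. by []. Qed.

Lemma eq_term e f g w : f =1 g -> term e f w = term e g w.
Proof. by move=> H; rewrite /term !H. Qed.

Lemma eq_outflow G f g w : f =1 g -> outflow G f w = outflow G g w.
Proof. by move=> H; rewrite !outflowE; apply: eq_bigr => e _; apply: eq_term. Qed.

Lemma term_lin e f g (a b : R) w :
  term e (fun x => a * f x + b * g x) w = a * term e f w + b * term e g w.
Proof. by rewrite /term; case: ifP => _; case: ifP => _; ring. Qed.

Lemma term_const e f (c : R) w : term e (fun x => f x + c) w = term e f w.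
Proof. by rewrite /term; case: ifP => _; case: ifP => _; ring. Qed.

Lemma term_sum e (F : V -> V -> R) w :
  term e (fun x => \sum_v F v x) w = \sum_v term e (F v) w.
Proof.
rewrite /term big_split /=; congr (_ + _); case: ifP => _;
  by [rewrite -sumrB mulr_suml | rewrite big1].
Qed.

Lemma outflow_lin G f g (a b : R) w :
  outflow G (fun x => a * f x + b * g x) w = a * outflow G f w + b * outflow G g w.
Proof. by rewrite !outflowE 2!mulr_sumr -big_split; apply: eq_bigr => e _; apply: term_lin. Qed.

Lemma outflowZ G f (a : R) w : outflow G (fun x => a * f x) w = a * outflow G f w.
Proof.
rewrite (@eq_outflow _ _ (fun x => a * f x + 0 * f x)) ?outflow_lin; first by ring.
by move=> x; ring.
Qed.

Lemma outflowB G f g w : outflow G (fun x => f x - g x) w = outflow G f w - outflow G g w.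
Proof.
rewrite (@eq_outflow _ _ (fun x => 1 * f x + (-1) * g x)) ?outflow_lin; first by ring.
by move=> x; ring.
Qed.

Lemma outflowD G f g w : outflow G (fun x => f x + g x) w = outflow G f w + outflow G g w.
Proof.
rewrite (@eq_outflow _ _ (fun x => 1 * f x + 1 * g x)) ?outflow_lin; first by ring.
by move=> x; ring.
Qed.

Lemma outflow_const G f (c : R) w : outflow G (fun x => f x + c) w = outflow G f w.
Proof. by rewrite !outflowE; apply: eq_bigr => e _; apply: term_const. Qed.

Lemma outflow0 G w : outflow G (fun _ => 0) w = 0.
Proof. by rewrite (@eq_outflow _ _ (fun x => 0 * (fun _ => 0) x)) ?outflowZ ?mul0r // => x; rewrite mul0r. Qed.

Lemma outflow_sum G (F : V -> V -> R) w :
  outflow G (fun x => \sum_v F v x) w = \sum_v outflow G (F v) w.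
Proof.
rewrite outflowE (eq_bigr (fun e => \sum_v term e (F v) w)); last by move=> e _; apply: term_sum.
by rewrite exchange_big.
Qed.

Lemma sum_if_eq (A : {set V}) a (F : V -> R) :
  a \in A -> \sum_(w in A) (if a == w then F w else 0) = F a.
Proof.
move=> aA; rewrite (bigD1 a) //= eqxx big1 ?addr0 // => w /andP[_].
by rewrite eq_sym => /negbTE ->.
Qed.

Lemma sbp G f g : wf_graph G ->
  \sum_(w in verts G) g w * outflow G f w =
  \sum_(e <- edges G) (g (ep1 e) - g (ep2 e)) * (f (ep1 e) - f (ep2 e)) / len e.
Proof.
move=> wf.
rewrite (eq_bigr (fun w => \sum_(e <- edges G) g w * term e f w)); last first.
  by move=> w _; rewrite outflowE mulr_sumr.
rewrite exchange_big /=; apply: eq_big_seq => e eE.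
case: (wf e eE) => h1 h2 _.
rewrite (eq_bigr (fun w => (if ep1 e == w then g w * ((f w - f (ep2 e)) / len e) else 0)
   + (if ep2 e == w then g w * ((f w - f (ep1 e)) / len e) else 0))); last first.
  by move=> w _; rewrite /term mulrDr; case: ifP => _; case: ifP => _; rewrite ?mulr0.
rewrite big_split /= !sum_if_eq //; ring.
Qed.

Lemma sum_outflow G f : wf_graph G -> \sum_(w in verts G) outflow G f w = 0.
Proof.
move=> wf; rewrite (eq_bigr (fun w => (fun _ => 1) w * outflow G f w)); last by move=> w _; rewrite mul1r.
by rewrite sbp // big1 // => e _; rewrite subrr !mul0r.
Qed.

Lemma adj_sym G : symmetric (adj G).
Proof.
move=> x y; rewrite /adj; apply: eq_in_has => e _.
by rewrite orbC.
Qed.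

Lemma ker0 G h : wf_graph G -> connectedb G ->
  \sum_(w in verts G) h w * outflow G h w = 0 ->
  {in verts G &, forall x y, h x = h y}.
Proof.
move=> wf conn; rewrite sbp // big_seq => /eqP; rewrite psumr_eq0; last first.
  move=> e eE; apply: divr_ge0; first by rewrite -expr2 sqr_ge0.
  by case: (wf e eE) => _ _ /ltW.
move=> /allP Hall.
have Hedge : forall e, e \in edges G -> h (ep1 e) = h (ep2 e).
  move=> e eE; have := Hall e eE; rewrite eE implyTb => /eqP.
  case: (wf e eE) => _ _ lpos.
  move/eqP; rewrite mulf_eq0 invr_eq0 (gt_eqF lpos) orbF mulf_eq0 orbb subr_eq0.
  by move/eqP.
move=> x y xS yS.
have cl : closed (adj G) [pred v | h v == h x].
  move=> u w /hasP[e eE /orP[/andP[/eqP<- /eqP<-]|/andP[/eqP<- /eqP<-]]];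
    by rewrite !inE (Hedge e eE).
move/forall_inP: conn => /(_ x xS) /forall_inP /(_ y yS) cxy.
have := closed_connect cl cxy; rewrite !inE eqxx => /esym/eqP.
by [].
Qed.

Lemma uniq_up_to_const G f g : wf_graph G -> connectedb G ->
  {in verts G, forall w, outflow G f w = outflow G g w} ->
  {in verts G &, forall x y, f x - g x = f y - g y}.
Proof.
move=> wf conn H; apply: (@ker0 G (fun x => f x - g x)) => //.
by apply: big1 => w wS; rewrite outflowB H // subrr mulr0.
Qed.

End Basic.

End P1.
Import P1.

Module P2.


Section Exist.
Variables (V : finType) (R : realType).
Variables (G : mgraph V R) (z y : V).
Hypotheses (wf : wf_graph G) (conn : connectedb G) (zS : z \in verts G) (yS : y \in verts G).

Definition Tm (f : V -> R) (w : V) : R :=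
  if w \in verts G then (if w == z then f w else outflow G f w) else f w.

Lemma eq_Tm f g w : f =1 g -> Tm f w = Tm g w.
Proof. by move=> H; rewrite /Tm (eq_outflow _ _ H) H. Qed.

Lemma Tm_sum (F : V -> V -> R) w : Tm (fun x => \sum_v F v x) w = \sum_v Tm (F v) w.
Proof. by rewrite /Tm; case: ifP => _ //; case: ifP => _ //; rewrite outflow_sum. Qed.

Lemma TmZ f (a : R) w : Tm (fun x => a * f x) w = a * Tm f w.
Proof. by rewrite /Tm; case: ifP => _ //; case: ifP => _ //; rewrite outflowZ. Qed.

Definition delta (v : V) : V -> R := fun x => if x == v then 1 else 0.

Lemma fun_decomp f x : f x = \sum_v f v * delta v x.
Proof.
rewrite (bigD1 x) //= /delta eqxx mulr1 big1 ?addr0 // => v /negbTE.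
by rewrite eq_sym => ->; rewrite mulr0.
Qed.

Lemma Tm_decomp f w : Tm f w = \sum_v f v * Tm (delta v) w.
Proof.
rewrite (@eq_Tm _ (fun x => \sum_v (fun v x => f v * delta v x) v x) w); last exact: fun_decomp.
by rewrite Tm_sum; apply: eq_bigr => v _; rewrite TmZ.
Qed.

Lemma Tm_inj f : (forall w, Tm f w = 0) -> forall w, f w = 0.
Proof.
move=> H.
have Hout : forall w, w \in verts G -> w != z -> outflow G f w = 0.
  by move=> w wS wz; have := H w; rewrite /Tm wS (negbTE wz).
have fz : f z = 0 by have := H z; rewrite /Tm zS eqxx.
have Hc : {in verts G &, forall x y, f x = f y}.
  apply: ker0 => //; rewrite (bigD1 z) //= fz mul0r add0r big1 // => w /andP[wS wz].
  by rewrite Hout // mulr0.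
move=> w; case wS: (w \in verts G); first by rewrite (Hc w z) //.
by have := H w; rewrite /Tm wS.
Qed.

Local Notation n := #|V|.

Definition Amx : 'M[R]_n := \matrix_(i, j) Tm (delta (enum_val i)) (enum_val j).

Definition fu (u : 'rV[R]_n) : V -> R := fun v => u 0 (enum_rank v).

Lemma mulAmx u j : (u *m Amx) 0 j = Tm (fu u) (enum_val j).
Proof.
rewrite mxE Tm_decomp [RHS](reindex (fun i : 'I_n => enum_val i)) /=; last first.
  by apply: onW_bij; exact: enum_val_bij.
by apply: eq_bigr => i _; rewrite /fu enum_valK mxE.
Qed.

Lemma Amx_unit : Amx \in unitmx.
Proof.
rewrite -row_free_unit -kermx_eq0; apply/eqP/row_matrixP => i; rewrite row0.
have K : row i (kermx Amx) *m Amx = 0 by apply/sub_kermxP; exact: row_sub.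
set u := row i (kermx Amx) in K *.
have Hf : forall w, Tm (fu u) w = 0.
  move=> w; rewrite -(enum_rankK w) -mulAmx K mxE //.
apply/rowP => k; rewrite [RHS]mxE.
have := Tm_inj Hf (enum_val k); rewrite /fu enum_valK.
have -> : (0 : 'I_1) = ord0 by apply: val_inj.
by [].
Qed.

Lemma voltage_exists : exists f, is_voltage G z y f.
Proof.
pose tgt (w : V) : R := if w \in verts G then (if w == z then 0 else
   (if w == y then 1 else 0) - (if w == z then 1 else 0)) else 0.
pose b : 'rV[R]_n := \row_j tgt (enum_val j).
pose u := b *m invmx Amx.
have Hu : forall w, Tm (fu u) w = tgt w.
  move=> w; rewrite -(enum_rankK w) -mulAmx /u mulmxKV ?Amx_unit // mxE //.
exists (fu u); split.
  by have := Hu z; rewrite /Tm /tgt zS eqxx.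
have Hne : forall w, w \in verts G -> w != z ->
   outflow G (fu u) w = (if w == y then 1 else 0) - (if w == z then 1 else 0).
  by move=> w wS wz; have := Hu w; rewrite /Tm /tgt wS (negbTE wz).
move=> w wS; case: (eqVneq w z) => [->|wz]; last by rewrite Hne // (negbTE wz).
have Hs := sum_outflow (fu u) wf; rewrite (bigD1 z) //= in Hs.
have Hr : \sum_(v in verts G | v != z) outflow G (fu u) v = if z == y then 0 else 1.
  rewrite (eq_bigr (fun v => if v == y then 1 else 0)); last first.
    by move=> v /andP[vS vz]; rewrite Hne // (negbTE vz) subr0.
  case: (eqVneq z y) => [<-|zy].
    by rewrite big1 // => v /andP[_ /negbTE ->].
  rewrite (bigD1 y) /=; last by rewrite yS eq_sym zy.
  by rewrite eqxx big1 ?addr0 // => v /andP[/andP[_ _] /negbTE ->].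
rewrite Hr in Hs; move: Hs; case: (eqVneq z y) => _ Hs; lra.
Qed.

End Exist.

End P2.
Import P2.

Module P3.


Section Green.
Variables (V : finType) (R : realType).
Implicit Types (G : mgraph V R) (e : V * V * R) (f g h : V -> R).

Definition dl (a : V) (w : V) : R := if w == a then 1 else 0.

Lemma sum_dl2 (A : {set V}) g a b : a \in A -> b \in A ->
  \sum_(w in A) g w * (dl a w - dl b w) = g a - g b.
Proof.
move=> aA bA; rewrite (eq_bigr (fun w => (if a == w then g w else 0) - (if b == w then g w else 0))).
  by rewrite sumrB !sum_if_eq.
by move=> w _; rewrite /dl ![w == _]eq_sym; case: ifP => _; case: ifP => _; ring.
Qed.

Lemma jvolt_spec G z y : wf_graph G -> connectedb G -> z \in verts G -> y \in verts G ->
  is_voltage G z y (fun x => jvolt G z x y).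
Proof.
move=> wf conn zS yS; rewrite /jvolt.
exact: (epsilon_spec (inhabits (fun _ : V => 0 : R)) (is_voltage G z y) (voltage_exists wf conn zS yS)).
Qed.

Lemma jvolt_char G z y f : wf_graph G -> connectedb G -> z \in verts G -> y \in verts G ->
  {in verts G, forall w, outflow G f w = dl y w - dl z w} ->
  {in verts G, forall x, jvolt G z x y = f x - f z}.
Proof.
move=> wf conn zS yS Hf x xS.
case: (jvolt_spec wf conn zS yS) => h0 h1.
have H : {in verts G, forall w, outflow G (fun x => jvolt G z x y) w = outflow G f w}.
  by move=> w wS; rewrite h1 // Hf.
have E := uniq_up_to_const wf conn H xS zS; rewrite /= h0 in E; lra.
Qed.

Lemma term_flat e f w : f (ep1 e) = f (ep2 e) -> term e f w = 0.
Proof.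
move=> H; rewrite /term; case: eqP => [<-|_]; case: eqP => [<-|_]; try rewrite H;
  by rewrite ?subrr ?mul0r ?addr0.
Qed.

Lemma outflow_del G e f w : e \in edges G ->
  outflow (delete_edge G e) f w = outflow G f w - term e f w.
Proof. by move=> eE; rewrite !outflowE [in RHS](big_rem _ eE) /=; ring. Qed.

Lemma wf_del G e : wf_graph G -> wf_graph (delete_edge G e).
Proof. by move=> wf f /mem_rem; apply: wf. Qed.

Variables (G : mgraph V R) (p : V).
Hypotheses (wf : wf_graph G) (conn : connectedb G) (pS : p \in verts G).

Definition Phi (x : V) : V -> R := fun w => jvolt G p w x.

Lemma Phi_p x : x \in verts G -> Phi x p = 0.
Proof. by move=> xS; case: (jvolt_spec wf conn pS xS). Qed.

Lemma Phi_out x w : x \in verts G -> w \in verts G ->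
  outflow G (Phi x) w = dl x w - dl p w.
Proof. by move=> xS wS; case: (jvolt_spec wf conn pS xS) => _ ->. Qed.

Lemma Phi_sum x w : x \in verts G -> w \in verts G ->
  \sum_(v in verts G) Phi x v * outflow G (Phi w) v = Phi x w.
Proof.
move=> xS wS.
rewrite (eq_bigr (fun v => Phi x v * (dl w v - dl p v))); last by move=> v vS; rewrite Phi_out.
by rewrite sum_dl2 // Phi_p // subr0.
Qed.

Lemma Phi_sym x w : x \in verts G -> w \in verts G -> Phi x w = Phi w x.
Proof.
move=> xS wS; rewrite -Phi_sum // -[RHS]Phi_sum // !sbp //.
by apply: eq_bigr => e _; ring.
Qed.

Lemma jvolt_Phi z x y : z \in verts G -> y \in verts G -> x \in verts G ->
  jvolt G z x y = Phi y x - Phi z x - Phi y z + Phi z z.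
Proof.
move=> zS yS xS; rewrite (@jvolt_char G z y (fun v => Phi y v - Phi z v)) //; first by ring.
by move=> w wS; rewrite outflowB !Phi_out //; ring.
Qed.

Definition Rr a b := Phi a a - Phi a b - Phi b a + Phi b b.
Definition Qq a b := Phi a a - Phi b b.

Lemma energy_Phi x : x \in verts G ->
  \sum_(e <- edges G) (Phi x (ep1 e) - Phi x (ep2 e)) * (Phi x (ep1 e) - Phi x (ep2 e)) / len e
  = Phi x x.
Proof.
move=> xS; rewrite -sbp //.
rewrite (eq_bigr (fun v => Phi x v * (dl x v - dl p v))); last by move=> v vS; rewrite Phi_out.
by rewrite sum_dl2 // Phi_p // subr0.
Qed.

End Green.
Arguments dl {V R}.

End P3.
Import P3.

Module P4.


Section YF.
Variables (V : finType) (R : realType).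
Implicit Types (G : mgraph V R) (e : V * V * R).

Lemma term_dl e f v :
  term e f v = (f (ep1 e) - f (ep2 e)) / len e * (dl (ep1 e) v - dl (ep2 e) v).
Proof.
rewrite /term /dl ![v == _]eq_sym; move: (ep1 e) (ep2 e) (len e) => a b l.
case: (eqVneq a v) => [?|h1]; case: (eqVneq b v) => [?|h2]; subst; rewrite ?eqxx; ring.
Qed.

Lemma in_rem_or (T : eqType) (x y : T) (s : seq T) : y \in s -> x \in s ->
  x = y \/ x \in rem y s.
Proof.
move=> yS xS; have := perm_mem (perm_to_rem yS) x; rewrite xS inE.
by move/esym; case/orP => [/eqP ->|]; [left|right].
Qed.

Lemma adj_of_edge G f : f \in edges G -> adj G (ep1 f) (ep2 f).
Proof. by move=> fE; apply/hasP; exists f => //; rewrite !eqxx. Qed.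

Lemma adj_edge G u w : adj G u w -> exists2 f, f \in edges G &
  (ep1 f = u /\ ep2 f = w) \/ (ep1 f = w /\ ep2 f = u).
Proof.
case/hasP => f fE /= /orP[/andP[/eqP h1 /eqP h2]|/andP[/eqP h1 /eqP h2]]; exists f => //;
  by [left|right].
Qed.

Section Comp.
Variables (G : mgraph V R) (a : V).
Definition compC : pred V := [pred v | connect (adj G) a v].

Lemma compC_closed u w : adj G u w -> (u \in compC) = (w \in compC).
Proof.
move=> auw; rewrite !inE; apply/idP/idP => h.
  by apply: connect_trans h (connect1 auw).
by apply: connect_trans h (connect1 _); rewrite adj_sym.
Qed.
End Comp.

Lemma del_conn G e : wf_graph G -> connectedb G -> e \in edges G ->
  connect (adj (delete_edge G e)) (ep1 e) (ep2 e) -> connectedb (delete_edge G e).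
Proof.
move=> wf conn eE cab.
set G' := delete_edge G e.
case: (wf e eE) => aS bS _.
have cl : closed (adj G) (compC G' (ep1 e)).
  move=> u w /adj_edge [f fE Hf].
  case: (in_rem_or eE fE) => [fe|fE'].
    subst f; have ha : ep1 e \in compC G' (ep1 e) by rewrite inE connect0.
    have hb : ep2 e \in compC G' (ep1 e) by rewrite inE.
    by case: Hf => [[<- <-]|[<- <-]]; rewrite ha hb.
  have af := @adj_of_edge G' f fE'.
  case: Hf => [[<- <-]|[<- <-]]; first exact: (@compC_closed G' (ep1 e) _ _ af).
  by rewrite (@compC_closed G' (ep1 e) _ _ af).
have inC : forall v, v \in verts G -> connect (adj G') (ep1 e) v.
  move=> v vS; move/forall_inP: (conn) => /(_ _ aS) /forall_inP /(_ v vS) cav.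
  by have := closed_connect cl cav; rewrite !inE connect0 => <-.
apply/forall_inP => x xS; apply/forall_inP => y yS.
apply: connect_trans (inC y yS).
by rewrite (sym_connect_sym (@adj_sym _ _ G')) inC.
Qed.

End YF.

End P4.
Import P4.

Module P5.


Lemma energy_ge0 (V : finType) (R : realType) (H : mgraph V R) (f : V -> R) :
  wf_graph H -> 0 <= \sum_(w in verts H) f w * outflow H f w.
Proof.
move=> wf; rewrite sbp // big_seq; apply: sumr_ge0 => e eE.
apply: divr_ge0; first by rewrite -expr2 sqr_ge0.
by case: (wf e eE) => _ _ /ltW.
Qed.

Section YF2.
Variables (V : finType) (R : realType).
Variables (G : mgraph V R) (p : V).
Hypotheses (wf : wf_graph G) (conn : connectedb G) (pS : p \in verts G).

Lemma outflow_u a b w : a \in verts G -> b \in verts G -> w \in verts G ->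
  outflow G (fun x => Phi G p a x - Phi G p b x) w = dl a w - dl b w.
Proof. by move=> aS bS wS; rewrite outflowB !Phi_out //; ring. Qed.

Lemma Qq_u a b : a \in verts G -> b \in verts G ->
  Qq G p a b = (Phi G p a a - Phi G p b a) + (Phi G p a b - Phi G p b b).
Proof. by move=> aS bS; rewrite /Qq (Phi_sym wf conn pS bS aS); ring. Qed.

Lemma YF_nonbridge e : e \in edges G -> ~~ is_bridge G e ->
  [/\ Defs.ratio G e = Rr G p (ep1 e) (ep2 e) / len e,
      yterm1 G e = Rr G p (ep1 e) (ep2 e) ^+ 2 / len e &
      yterm2 G p e = Qq G p (ep1 e) (ep2 e) ^+ 2 / len e].
Proof.
move=> eE nb.
case: (wf eE) => aS bS lpos.
set a := ep1 e in aS *; set b := ep2 e in bS *; set l := len e in lpos *.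
set G' := delete_edge G e.
have wf' : wf_graph G' by apply: wf_del.
have conn' : connectedb G' by move: nb; rewrite /is_bridge negbK.
set psi := fun x => jvolt G' b x a.
have [psib psiout] := jvolt_spec wf' conn' bS aS.
have {}psib : psi b = 0 by exact: psib.
have {}psiout : forall w, w \in verts G' -> outflow G' psi w = dl a w - dl b w by exact: psiout.
set ri := psi a.
have Riri : Ri G e = ri by [].
have ri_ge0 : 0 <= ri.
  have := energy_ge0 psi wf'.
  rewrite (eq_bigr (fun v => psi v * (dl a v - dl b v))); last by move=> v vS; rewrite psiout.
  by rewrite sum_dl2 // psib subr0.
have psiG : forall w, w \in verts G -> outflow G psi w = (l + ri) / l * (dl a w - dl b w).
  move=> w wS; have := outflow_del psi w eE; rewrite psiout // term_dl -/a -/b -/l psib.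
  move/eqP; rewrite eq_sym subr_eq => /eqP ->; rewrite -/ri subr0; field; by rewrite gt_eqF.
have Hu : {in verts G, forall w, outflow G (fun x => (l + ri) * (Phi G p a x - Phi G p b x)) w
                              = outflow G (fun x => l * psi x) w}.
  move=> w wS; rewrite (outflowZ G (fun x => Phi G p a x - Phi G p b x)) outflowZ psiG //.
  rewrite outflow_u //; field; by rewrite gt_eqF.
have E := uniq_up_to_const wf conn Hu.
have Ea := E a p aS pS; have Eb := E b p bS pS; rewrite /= !Phi_p // psib in Ea Eb.
have lr0 : 0 < l + ri by lra.
have hR : Rr G p a b = l * ri / (l + ri).
  rewrite /Rr; apply: (@mulfI _ (l + ri)); first by rewrite gt_eqF.
  rewrite mulrCA divff ?gt_eqF // mulr1 -/ri; move: Ea Eb; rewrite -/ri => Ea Eb. 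
  have -> : (l + ri) * (Phi G p a a - Phi G p a b - Phi G p b a + Phi G p b b) =
    (l + ri) * (Phi G p a a - Phi G p b a) - (l + ri) * (Phi G p a b - Phi G p b b) by ring.
  lra.
have hQ : Qq G p a b = l * (ri - 2 * psi p) / (l + ri).
  rewrite Qq_u //; apply: (@mulfI _ (l + ri)); first by rewrite gt_eqF.
  rewrite mulrCA divff ?gt_eqF // mulr1; move: Ea Eb; rewrite -/ri => Ea Eb.
  rewrite mulrDr; lra.
have Ra : jvolt G' a p b = ri - psi p.
  rewrite (@jvolt_char _ _ G' a b (fun x => - psi x)) //; first by rewrite /ri; ring.
  move=> w wS; rewrite (@eq_outflow _ _ G' _ (fun x => (-1) * psi x)); last by move=> x; ring.
  by rewrite outflowZ psiout //; ring.
have hl : l != 0 by rewrite gt_eqF.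
have hlr : l + ri != 0 by rewrite gt_eqF.
split.
- by rewrite /Defs.ratio (negbTE nb) Riri hR -/l; field; rewrite ?hl ?hlr.
- by rewrite /yterm1 (negbTE nb) Riri hR -/l; field; rewrite ?hl ?hlr.
- rewrite /yterm2 (negbTE nb) -/G' Ra Riri hQ -/a -/b -/l.
  have -> : jvolt G' b p a = psi p by [].
  by field; rewrite ?hl ?hlr.
Qed.

Lemma YF_bridge e : e \in edges G -> is_bridge G e ->
  [/\ Defs.ratio G e = Rr G p (ep1 e) (ep2 e) / len e,
      yterm1 G e = Rr G p (ep1 e) (ep2 e) ^+ 2 / len e &
      yterm2 G p e = Qq G p (ep1 e) (ep2 e) ^+ 2 / len e].
Proof.
move=> eE br.
case: (wf eE) => aS bS lpos.
set a := ep1 e in aS *; set b := ep2 e in bS *; set l := len e in lpos *.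
set G' := delete_edge G e.
have wf' : wf_graph G' by apply: wf_del.
set C := compC G' a.
have bC : b \notin C.
  by apply/negP => bC; move: br; rewrite /is_bridge (del_conn wf conn eE bC).
have aC : a \in C by rewrite inE connect0.
set u := fun x => Phi G p a x - Phi G p b x.
have uout : forall w, w \in verts G -> outflow G u w = dl a w - dl b w.
  by move=> w wS; apply: outflow_u.
pose gC := fun v => if v \in C then 1 else 0 : R.
have S1 : \sum_(w in verts G') gC w * outflow G' u w = 0.
  rewrite sbp // big1_seq // => f /= fE.
  have af := @adj_of_edge _ _ G' f fE.
  by rewrite /gC (@compC_closed _ _ G' a _ _ af) subrr !mul0r.
have hl : l != 0 by rewrite gt_eqF.
have S2 : \sum_(w in verts G') gC w * outflow G' u w = (1 - (u a - u b) / l) * (gC a - gC b).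
  rewrite (_ : verts G' = verts G) //.
  rewrite (eq_bigr (fun w => ((1 - (u a - u b)/l) * gC w) * (dl a w - dl b w))).
    by rewrite sum_dl2 //; ring.
  move=> w wS; rewrite outflow_del // uout // term_dl -/a -/b -/l; ring.
have hRr : u a - u b = l.
  move: S2; rewrite S1 /gC aC (negbTE bC) subr0 mulr1 => /eqP; rewrite eq_sym subr_eq0 => /eqP.
  move/(congr1 (fun x => x * l)); rewrite mul1r mulfVK //.
have Rru : Rr G p a b = u a - u b by rewrite /Rr /u; ring.
pose v' := fun x => if x \in C then u a else u b.
have Hv : {in verts G, forall w, outflow G u w = outflow G v' w}.
  move=> w wS; rewrite uout // [RHS]outflowE (big_rem _ eE) /= big1_seq ?addr0; last first.
    move=> f /= fE; apply: term_flat.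
    have af := @adj_of_edge _ _ G' f fE.
    by rewrite /v' /C (@compC_closed _ _ G' a _ _ af).
  by rewrite term_dl -/a -/b -/l /v' aC (negbTE bC) hRr divff // mul1r.
have E := uniq_up_to_const wf conn Hv pS aS.
have up : u p = 0 by rewrite /u !Phi_p // subrr.
rewrite up /v' aC subrr in E.
have hQ : Qq G p a b = u a + u b by rewrite Qq_u.
have hsq : Qq G p a b ^+ 2 = l ^+ 2.
  rewrite hQ -hRr; move: E; case: ifP => _ /eqP; rewrite sub0r oppr_eq0 => /eqP ->; ring.
split.
- by rewrite /Defs.ratio br Rru hRr divff.
- by rewrite /yterm1 br Rru hRr -/l; field.
- by rewrite /yterm2 br hsq -/l; field.
Qed.

Lemma YF e : e \in edges G ->
  [/\ Defs.ratio G e = Rr G p (ep1 e) (ep2 e) / len e,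
      yterm1 G e = Rr G p (ep1 e) (ep2 e) ^+ 2 / len e &
      yterm2 G p e = Qq G p (ep1 e) (ep2 e) ^+ 2 / len e].
Proof. by move=> eE; case br: (is_bridge G e); [apply: YF_bridge | apply: YF_nonbridge => //; rewrite br]. Qed.

Lemma y_invE : y_inv G p =
  \sum_(e <- edges G) (Rr G p (ep1 e) (ep2 e) ^+ 2 + 3 * Qq G p (ep1 e) (ep2 e) ^+ 2) / (4 * len e).
Proof.
rewrite /y_inv !big_seq !mulr_sumr -big_split /=; apply: eq_bigr => e eE.
case: (YF eE) => _ -> ->; case: (wf eE) => _ _ lpos.
by field; rewrite gt_eqF.
Qed.

End YF2.

End P5.
Import P5.

Module P6.


Section Contract.
Variables (V : finType) (R : realType).
Variables (G : mgraph V R) (e : V * V * R).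
Hypotheses (wf : wf_graph G) (conn : connectedb G) (eE : e \in edges G)
  (hab : ep1 e != ep2 e).

Definition rn (x : V) : V := if x == ep2 e then ep1 e else x.
Definition cmap (d : V * V * R) : V * V * R := (rn (ep1 d), rn (ep2 d), len d).

Lemma contract_edges : edges (contract G e) = map cmap (rem e (edges G)).
Proof. by []. Qed.
Lemma contract_verts : verts (contract G e) = verts G :\ ep2 e.
Proof. by []. Qed.

Lemma aS : ep1 e \in verts G. Proof. by case: (wf eE). Qed.
Lemma bS : ep2 e \in verts G. Proof. by case: (wf eE). Qed.

Lemma rn_in x : x \in verts G -> rn x \in verts (contract G e).
Proof.
move=> xS; rewrite contract_verts /rn; case: eqP => [_|/eqP hx]; rewrite !inE.
  by rewrite hab aS.
by rewrite hx xS.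
Qed.

Lemma rn_id x : x \in verts (contract G e) -> rn x = x.
Proof. by rewrite contract_verts !inE /rn => /andP[/negbTE -> _]. Qed.

Lemma in_contract x : x \in verts (contract G e) -> x \in verts G.
Proof. by rewrite contract_verts !inE => /andP[]. Qed.

Lemma wf_contract : wf_graph (contract G e).
Proof.
move=> d; rewrite contract_edges => /mapP [f /mem_rem fE ->].
by case: (wf fE) => h1 h2 h3; split => //; apply: rn_in.
Qed.

Lemma card_contract : #|verts G| = #|verts (contract G e)|.+1.
Proof. by rewrite contract_verts (cardsD1 (ep2 e)) bS. Qed.

Lemma conn_contract : connectedb (contract G e).
Proof.
set G' := contract G e.
have cl : closed (adj G) [pred v | rn v \in compC G' (ep1 e)].
  move=> u w /adj_edge [f fE Hf].
  case: (in_rem_or eE fE) => [fe|fE'].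
    subst f; rewrite !inE; have -> : rn u = rn w.
      by case: Hf => [[<- <-]|[<- <-]]; rewrite /rn eqxx (negbTE hab).
    by [].
  have af : adj G' (rn (ep1 f)) (rn (ep2 f)).
    apply/hasP; exists (cmap f); first by rewrite contract_edges map_f.
    by rewrite /= !eqxx.
  rewrite !inE.
  case: Hf => [[<- <-]|[<- <-]]; first exact: (@compC_closed _ _ G' (ep1 e) _ _ af).
  by apply/esym; exact: (@compC_closed _ _ G' (ep1 e) _ _ af).
have inC : forall v, v \in verts G -> connect (adj G') (ep1 e) (rn v).
  move=> v vS; move/forall_inP: (conn) => /(_ _ aS) /forall_inP /(_ v vS) cav.
  have := closed_connect cl cav; rewrite !inE.
  by rewrite {1}/rn (negbTE hab) connect0 => <-.
apply/forall_inP => x xS; apply/forall_inP => y yS.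
have := inC y (in_contract yS); rewrite (rn_id yS) => cy.
apply: connect_trans cy.
by rewrite (sym_connect_sym (@adj_sym _ _ G')) -{1}(rn_id xS) inC // in_contract.
Qed.

Lemma f_rn (f : V -> R) : f (ep1 e) = f (ep2 e) -> forall x, f (rn x) = f x.
Proof. by move=> H x; rewrite /rn; case: eqP => [->|]. Qed.

Lemma dl_rn x w : w != ep2 e ->
  dl (rn x) w = dl x w + (if w == ep1 e then dl x (ep2 e) else 0) :> R.
Proof.
move=> wb; rewrite /dl /rn; case: (eqVneq x (ep2 e)) => [->|xb].
  by rewrite (negbTE wb) ?eqxx add0r.
by rewrite if_same addr0.
Qed.

Lemma outflow_contract (f : V -> R) w : f (ep1 e) = f (ep2 e) -> w != ep2 e ->
  outflow (contract G e) f w = outflow G f w + (if w == ep1 e then outflow G f (ep2 e) else 0).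
Proof.
move=> fab wb; rewrite outflowE contract_edges big_map.
have H1 : forall d, term (cmap d) f w = term d f w + (if w == ep1 e then term d f (ep2 e) else 0).
  move=> d; rewrite !term_dl /cmap /= !(f_rn fab) !dl_rn //.
  by case: ifP => _; ring.
rewrite (eq_bigr _ (fun d _ => H1 d)) big_split /=.
have Hd : forall v, \sum_(d <- rem e (edges G)) term d f v = outflow G f v.
  by move=> v; have := outflow_del f v eE; rewrite (term_flat _ fab) subr0 => <-.
rewrite Hd; congr (_ + _); case: ifP => _; first by rewrite Hd.
by rewrite big1.
Qed.

Variables (p : V).
Hypothesis (pS : p \in verts G).

Definition uu (x : V) : R := Phi G p (ep1 e) x - Phi G p (ep2 e) x.
Definition rr : R := Rr G p (ep1 e) (ep2 e).

Lemma rrE : rr = uu (ep1 e) - uu (ep2 e).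
Proof. by rewrite /rr /Rr /uu; ring. Qed.

Lemma uu_out w : w \in verts G -> outflow G uu w = dl (ep1 e) w - dl (ep2 e) w.
Proof. by move=> wS; apply: outflow_u => //; [apply: aS | apply: bS]. Qed.

Lemma uu_p : uu p = 0.
Proof. by rewrite /uu !Phi_p // ?subrr //; [apply: bS | apply: aS]. Qed.

Lemma rr_neq0 : rr != 0.
Proof.
apply/negP => /eqP r0.
have Hc : {in verts G &, forall x y, uu x = uu y}.
  apply: ker0 => //.
  rewrite (eq_bigr (fun w => uu w * (dl (ep1 e) w - dl (ep2 e) w))); last by move=> w wS; rewrite uu_out.
  by rewrite sum_dl2 ?aS ?bS // -rrE.
have := uu_out (aS); rewrite /dl eqxx (negbTE hab) subr0 outflowE big1_seq //.
  by move/eqP; rewrite eq_sym oner_eq0.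
move=> d dE; rewrite term_dl; case: (wf dE) => h1 h2 _.
by rewrite (Hc _ _ h1 h2) subrr !mul0r.
Qed.

Lemma Phi_contract x w : x \in verts (contract G e) -> w \in verts (contract G e) ->
  Phi (contract G e) (rn p) x w = Phi G p x w - uu x * uu w / rr.
Proof.
move=> xS' wS'.
have xS := in_contract xS'; have wS := in_contract wS'.
pose f := fun v => Phi G p x v - uu x * uu v / rr.
have fab : f (ep1 e) = f (ep2 e).
  rewrite /f; apply/eqP; rewrite -subr_eq0.
  have -> : Phi G p x (ep1 e) - uu x * uu (ep1 e) / rr - (Phi G p x (ep2 e) - uu x * uu (ep2 e) / rr)
     = (Phi G p x (ep1 e) - Phi G p x (ep2 e)) - uu x * (uu (ep1 e) - uu (ep2 e)) / rr by ring.
  rewrite -rrE mulfK ?rr_neq0 //.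
  by rewrite /uu (Phi_sym wf conn pS xS aS) (Phi_sym wf conn pS xS bS) subrr.
have fout : forall v, v \in verts G ->
    outflow G f v = dl x v - dl p v - uu x / rr * (dl (ep1 e) v - dl (ep2 e) v).
  move=> v vS; rewrite (@eq_outflow _ _ G _ (fun v => 1 * Phi G p x v + (- (uu x / rr)) * uu v));
    last by move=> y; rewrite /f; ring.
  by rewrite outflow_lin Phi_out // uu_out //; ring.
have fp : f (rn p) = 0 by rewrite (f_rn fab) /f Phi_p // uu_p; ring.
rewrite /Phi (@jvolt_char _ _ (contract G e) (rn p) x f) //.
- by rewrite fp subr0.
- exact: wf_contract.
- exact: conn_contract.
- exact: rn_in.
move=> v vS'; have vS := in_contract vS'.
have vb : v != ep2 e by move: vS'; rewrite contract_verts !inE => /andP[].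
have xb : x != ep2 e by move: xS'; rewrite contract_verts !inE => /andP[].
rewrite outflow_contract // !fout ?bS // dl_rn //.
have d1 : dl x (ep2 e) = 0 :> R by rewrite /dl eq_sym (negbTE xb).
have d2 : dl (ep1 e) (ep2 e) = 0 :> R by rewrite /dl eq_sym (negbTE hab).
have d3 : dl (ep2 e) (ep2 e) = 1 :> R by rewrite /dl eqxx.
have d4 : dl (ep2 e) v = 0 :> R by rewrite /dl (negbTE vb).
have d5 : dl (ep1 e) v = (if v == ep1 e then 1 else 0) :> R by [].
rewrite d1 d2 d3 d4 d5; case: ifP => _; ring.
Qed.

End Contract.

End P6.
Import P6.

Module P7.


Section Contract2.
Variables (V : finType) (R : realType).
Variables (G : mgraph V R) (e : V * V * R) (p : V).
Hypotheses (wf : wf_graph G) (conn : connectedb G) (eE : e \in edges G)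
  (hab : ep1 e != ep2 e) (pS : p \in verts G).

Local Notation uu := (uu G e p).
Local Notation rr := (rr G e p).
Local Notation rn := (rn e).

Definition Hh x y := Phi G p x y - uu x * uu y / rr.

Lemma rr0 : rr != 0. Proof. exact: rr_neq0. Qed.

Lemma Hh_rn1 x y : x \in verts G -> y \in verts G -> Hh (rn x) y = Hh x y.
Proof.
move=> xS yS; rewrite /P6.rn; case: eqP => [->|_] //.
apply/eqP; rewrite -subr_eq0 /Hh.
have -> : Phi G p (ep1 e) y - uu (ep1 e) * uu y / rr - (Phi G p (ep2 e) y - uu (ep2 e) * uu y / rr)
  = uu y - (uu (ep1 e) - uu (ep2 e)) * uu y / rr by rewrite /P6.uu; ring.
by rewrite -rrE // mulrAC divff ?rr0 // mul1r subrr.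
Qed.

Lemma Hh_sym x y : x \in verts G -> y \in verts G -> Hh x y = Hh y x.
Proof. by move=> xS yS; rewrite /Hh (Phi_sym wf conn pS xS yS) [uu x * _]mulrC. Qed.

Lemma rn_S x : x \in verts G -> rn x \in verts G.
Proof. by move=> xS; apply: in_contract; apply: rn_in. Qed.

Lemma Hh_rn x y : x \in verts G -> y \in verts G -> Hh (rn x) (rn y) = Hh x y.
Proof.
move=> xS yS; rewrite Hh_rn1 ?rn_S // Hh_sym ?rn_S // Hh_rn1 // Hh_sym //.
Qed.

Definition XX (d : V * V * R) := uu (ep1 d) - uu (ep2 d).
Definition YY (d : V * V * R) := uu (ep1 d) + uu (ep2 d).
Definition Tt (d : V * V * R) := ((Rr G p (ep1 d) (ep2 d) - XX d ^+ 2 / rr) ^+ 2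
   + 3 * (Qq G p (ep1 d) (ep2 d) - XX d * YY d / rr) ^+ 2) / (4 * len d).

Lemma y_contract : y_inv (contract G e) (rn p) = \sum_(d <- edges G) Tt d.
Proof.
have wf' := wf_contract wf eE hab; have conn' := conn_contract wf conn eE hab.
rewrite (y_invE wf' conn' (rn_in wf eE hab pS)) contract_edges big_map.
rewrite [RHS](big_rem _ eE) /=.
have -> : Tt e = 0.
  rewrite /Tt /XX /YY -rrE // Qq_u ?aS ?bS // -/(rr) /P6.uu.
  case: (wf eE) => _ _ lpos.
  by field; rewrite ?rr0 ?gt_eqF.
rewrite add0r; apply: eq_big_seq => d /mem_rem dE.
case: (wf dE) => h1 h2 _.
have i1 := rn_in wf eE hab h1; have i2 := rn_in wf eE hab h2.
rewrite /Rr /Qq /cmap /= !Phi_contract // -!/(Hh _ _) !Hh_rn // /Tt /Hh /XX /YY /Rr /Qq.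
ring.
Qed.

End Contract2.

End P7.
Import P7.

Module P8.


Section KI.
Variables (V : finType) (R : realType).
Variables (G : mgraph V R) (p : V).
Hypotheses (wf : wf_graph G) (conn : connectedb G) (pS : p \in verts G).

Local Notation r d := (Rr G p (ep1 d) (ep2 d)).
Local Notation q d := (Qq G p (ep1 d) (ep2 d)).
Local Notation X e d := (XX G e p d).
Local Notation Y e d := (YY G e p d).

Lemma foster : \sum_(e <- edges G) r e / len e = #|verts G|%:R - 1.
Proof.
have H1 : \sum_(w in verts G) outflow G (Phi G p w) w = #|verts G|%:R - 1.
  rewrite (eq_bigr (fun w => 1 - dl p w)); last by move=> w wS; rewrite Phi_out // /dl eqxx.
  rewrite sumrB sumr_const; congr (_ - _).
  by rewrite /dl (eq_bigr (fun w => if p == w then 1 else 0)) ?sum_if_eq // => w _; rewrite eq_sym.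
rewrite -H1.
rewrite (eq_bigr (fun w => \sum_(e <- edges G)
    (fun w => (Phi G p w (ep1 e) - Phi G p w (ep2 e)) / len e) w * (dl (ep1 e) w - dl (ep2 e) w)));
  last by move=> w _; rewrite outflowE; apply: eq_bigr => e _; rewrite term_dl.
rewrite exchange_big /=; apply: eq_big_seq => e eE.
case: (wf eE) => h1 h2 _.
by rewrite sum_dl2 // /Rr; ring.
Qed.

Lemma I2 d : d \in edges G -> \sum_(e <- edges G) X e d ^+ 2 / len e = r d.
Proof.
move=> dE; case: (wf dE) => h1 h2 _.
pose psi := fun x => Phi G p (ep1 d) x - Phi G p (ep2 d) x.
have -> : r d = \sum_(w in verts G) psi w * outflow G psi w.
  rewrite (eq_bigr (fun w => psi w * (dl (ep1 d) w - dl (ep2 d) w))).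
    by rewrite sum_dl2 // /psi /Rr; ring.
  by move=> w wS; rewrite outflow_u.
rewrite sbp //; apply: eq_big_seq => e eE; case: (wf eE) => g1 g2 _.
rewrite /XX /P6.uu /psi !(Phi_sym wf conn pS _ h1) // !(Phi_sym wf conn pS _ h2) //.
ring.
Qed.

Lemma I3 d : d \in edges G -> \sum_(e <- edges G) X e d * Y e d / len e = q d.
Proof.
move=> dE; case: (wf dE) => h1 h2 _.
rewrite /Qq -(energy_Phi wf conn pS h1) -(energy_Phi wf conn pS h2) -sumrB.
apply: eq_big_seq => e eE; case: (wf eE) => g1 g2 _.
rewrite /XX /YY /P6.uu !(Phi_sym wf conn pS _ h1) // !(Phi_sym wf conn pS _ h2) //.
ring.
Qed.

Lemma I4 e : e \in edges G ->
  \sum_(d <- edges G) (X e d ^+ 4 + 3 * X e d ^+ 2 * Y e d ^+ 2) / len d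
  = r e * (r e ^+ 2 + 3 * q e ^+ 2).
Proof.
move=> eE; case: (wf eE) => h1 h2 _.
set U := P6.uu G e p.
have -> : \sum_(d <- edges G) (X e d ^+ 4 + 3 * X e d ^+ 2 * Y e d ^+ 2) / len d
   = 4 * \sum_(w in verts G) (U w ^+ 3) * outflow G U w.
  rewrite sbp // mulr_sumr; apply: eq_bigr => d _; rewrite /XX /YY -/U; ring.
rewrite (eq_bigr (fun w => U w ^+ 3 * (dl (ep1 e) w - dl (ep2 e) w))); last first.
  by move=> w wS; rewrite /U uu_out.
rewrite sum_dl2 // Qq_u // -/(Rr G p (ep1 e) (ep2 e)).
have -> : Rr G p (ep1 e) (ep2 e) = U (ep1 e) - U (ep2 e) by rewrite /U /P6.uu /Rr; ring.
rewrite /U /P6.uu; ring.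
Qed.

Lemma loop_uu e : ep1 e = ep2 e -> forall x, P6.uu G e p x = 0.
Proof. by move=> h x; rewrite /P6.uu h subrr. Qed.

Definition Aa e d := (r e / len e) * ((r d ^+ 2 + 3 * q d ^+ 2) / (4 * len d)).
Definition Bb e d := (-2 * r d / (4 * len d)) * (X e d ^+ 2 / len e).
Definition Cc e d := (-6 * q d / (4 * len d)) * (X e d * Y e d / len e).
Definition Dd e d := (1 / (4 * len e * r e)) *
   ((X e d ^+ 4 + 3 * X e d ^+ 2 * Y e d ^+ 2) / len d).

Lemma KI : \sum_(e <- edges G | ep1 e != ep2 e) Defs.ratio G e * y_inv (contract G e) (rn e p)
  = (#|verts G|%:R - 2) * y_inv G p.
Proof.
have step1 : \sum_(e <- edges G | ep1 e != ep2 e) Defs.ratio G e * y_inv (contract G e) (rn e p)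
   = \sum_(e <- edges G) (r e / len e) * \sum_(d <- edges G) Tt G e p d.
  rewrite big_mkcond /=; apply: eq_big_seq => e eE.
  case: (YF wf conn pS eE) => -> _ _.
  case: ifP => [hab|/negbFE/eqP hab].
    by rewrite (y_contract wf conn eE hab pS).
  have -> : r e = 0 by rewrite /Rr hab; ring.
  by rewrite !mul0r.
have step2 : forall e, e \in edges G -> (r e / len e) * \sum_(d <- edges G) Tt G e p d
   = \sum_(d <- edges G) (Aa e d + Bb e d + Cc e d + Dd e d).
  move=> e eE; rewrite mulr_sumr; apply: eq_big_seq => d dE.
  case: (wf eE) => _ _ le; case: (wf dE) => _ _ ld.
  rewrite /Aa /Bb /Cc /Dd /Tt /XX /YY.
  case: (eqVneq (ep1 e) (ep2 e)) => [hab|hab].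
    have U0 := loop_uu hab.
    have -> : r e = 0 by rewrite /Rr hab; ring.
    have -> : P6.rr G e p = 0 by rewrite /P6.rr /Rr hab; ring.
    rewrite !U0; ring.
  have hr := rr_neq0 wf conn eE hab pS; rewrite /P6.rr in hr *.
  by field; rewrite ?hr ?gt_eqF.
rewrite step1 (eq_big_seq _ step2).
rewrite (eq_bigr (fun e => \sum_(d <- edges G) Aa e d + \sum_(d <- edges G) Bb e d
   + \sum_(d <- edges G) Cc e d + \sum_(d <- edges G) Dd e d)); last by move=> e _; rewrite !big_split.
rewrite !big_split /=.
have SA : \sum_(e <- edges G) \sum_(d <- edges G) Aa e d = (#|verts G|%:R - 1) * y_inv G p.
  rewrite (y_invE wf conn pS) -foster mulr_suml; apply: eq_bigr => e _.
  by rewrite mulr_sumr.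
have SB : \sum_(e <- edges G) \sum_(d <- edges G) Bb e d
    = \sum_(d <- edges G) (-2 * r d / (4 * len d)) * r d.
  rewrite exchange_big /=; apply: eq_big_seq => d dE.
  transitivity ((-2 * r d / (4 * len d)) * \sum_(e <- edges G) X e d ^+ 2 / len e).
    by rewrite mulr_sumr.
  by rewrite (I2 dE).
have SC : \sum_(e <- edges G) \sum_(d <- edges G) Cc e d
    = \sum_(d <- edges G) (-6 * q d / (4 * len d)) * q d.
  rewrite exchange_big /=; apply: eq_big_seq => d dE.
  transitivity ((-6 * q d / (4 * len d)) * \sum_(e <- edges G) X e d * Y e d / len e).
    by rewrite mulr_sumr.
  by rewrite (I3 dE).
have SD : \sum_(e <- edges G) \sum_(d <- edges G) Dd e d = y_inv G p.
  rewrite (y_invE wf conn pS); apply: eq_big_seq => e eE.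
  rewrite /Dd -mulr_sumr (I4 eE).
  case: (wf eE) => _ _ le.
  case: (eqVneq (ep1 e) (ep2 e)) => [hab|hab].
    have -> : r e = 0 by rewrite /Rr hab; ring.
    have -> : q e = 0 by rewrite /Qq hab; ring.
    by ring.
  have hr := rr_neq0 wf conn eE hab pS; rewrite /P6.rr in hr.
  by field; rewrite ?hr ?gt_eqF.
rewrite SA SB SC SD.
have E : \sum_(d <- edges G) (-2 * r d / (4 * len d)) * r d +
   \sum_(d <- edges G) (-6 * q d / (4 * len d)) * q d = -2 * y_inv G p.
  rewrite (y_invE wf conn pS) mulr_sumr -big_split; apply: eq_bigr => d _ /=; ring.
move: E; set sb := \sum_(d <- edges G) _ * r d; set sc := \sum_(d <- edges G) _ * q d.
move=> E; have -> : sb = -2 * y_inv G p - sc by rewrite -E addrK.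
ring.
Qed.

End KI.

End P8.
Import P8.

Module P9.


Section Final.
Variables (V : finType) (R : realType).

Lemma base_case (G : mgraph V R) (p : V) : wf_graph G -> connectedb G ->
  #|verts G| = 2%N -> p \in verts G -> y_inv G p = two_vertex_res G.
Proof.
move=> wf conn c2 pS.
have := enum_uniq (mem (verts G)); have : size (enum (verts G)) = 2%N by rewrite -cardE.
rewrite /two_vertex_res.
case E: (enum (verts G)) => [|a [|b [|c s]]] // _ Hu.
have aS : a \in verts G by rewrite -mem_enum E inE eqxx.
have bS : b \in verts G by rewrite -mem_enum E !inE eqxx orbT.
have hS : forall x, x \in verts G -> x = a \/ x = b.
  by move=> x; rewrite -mem_enum E !inE => /orP[/eqP|/eqP]; [left|right].
have Pz : forall w, w \in verts G -> Phi G p p w = 0.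
  move=> w wS; rewrite /Phi (@jvolt_char _ _ G p p (fun _ => 0)) // ?subrr //.
  by move=> v vS; rewrite outflow0 subrr.
have Pz2 : forall w, w \in verts G -> Phi G p w p = 0 by move=> w wS; apply: Phi_p.
have key : forall x y, x \in verts G -> y \in verts G ->
   Qq G p x y ^+ 2 = Rr G p x y ^+ 2 /\ Rr G p x y ^+ 2 = Rr G p a b * Rr G p x y.
  move=> x y xS yS.
  case: (hS p pS) => hp; case: (hS x xS) => ->; case: (hS y yS) => ->; subst p;
    rewrite /Rr /Qq !Pz // ?Pz2 //; split; ring.
have -> : eff_res G a b = Rr G p a b.
  by rewrite /eff_res (jvolt_Phi wf conn pS) // /Rr; ring.
rewrite (y_invE wf conn pS).
transitivity (\sum_(d <- edges G) Rr G p a b * (Rr G p (ep1 d) (ep2 d) / len d)).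
  apply: eq_big_seq => d dE; case: (wf d dE) => h1 h2 lpos.
  case: (key _ _ h1 h2) => -> ->.
  by field; rewrite gt_eqF.
by rewrite -mulr_sumr (foster wf conn pS) c2 -[2%:R]/(1 + 1) addrK mulr1.
Qed.

Lemma main_ind n : forall (G : mgraph V R) (p : V), wf_graph G -> connectedb G ->
  #|verts G| = n.+2 -> p \in verts G -> (n`!)%:R * y_inv G p = nested_sum n G.
Proof.
elim: n => [|n IH] G p wf conn cG pS.
  by rewrite fact0 mul1r (base_case wf conn cG pS).
rewrite [nested_sum _ _]/=.
rewrite big_seq_cond (eq_bigr (fun e => (n`!)%:R * (Defs.ratio G e * y_inv (contract G e) (rn e p))));
  last first.
  move=> e /andP[eE hab].
  rewrite -(IH _ (rn e p)) //.
  - by ring.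
  - exact: wf_contract.
  - exact: conn_contract.
  - by move: cG; rewrite (card_contract wf eE) => -[].
  - exact: rn_in.
rewrite -mulr_sumr -big_seq_cond (KI wf conn pS) cG factS natrM.
have -> : (n.+3%:R - 2 : R) = n.+1%:R.
  by rewrite -[n.+3]addn2 natrD addrK.
by rewrite mulrA [n`!%:R * _]mulrC.
Qed.

Lemma cor_aux (G : mgraph V R) (p : V) :
  wf_graph G -> connectedb G -> (3 <= #|verts G|)%N -> p \in verts G ->
  ((#|verts G| - 2)`!)%:R * y_inv G p = nested_sum (#|verts G| - 2) G.
Proof.
move=> wf conn c3 pS; apply: main_ind => //.
by rewrite -addn2 subnK // (leq_trans _ c3).
Qed.

End Final.

End P9.
Import P9.

Unset Implicit Arguments.

Theorem corollary3p13 (V : finType) (R : realType) (G : mgraph V R) (p : V) :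
  wf_graph G -> connectedb G -> (3 <= #|verts G|)%N -> p \in verts G ->
  ((#|verts G| - 2)`!)%:R * y_inv G p = nested_sum (#|verts G| - 2) G.
Proof. exact: (@P9.cor_aux V R G p). Qed.
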